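(* Let $\mathcal S=(S_1,\dots,S_s)\in B(H)^s$ be an $s$-tuple of selfadjoint operators, let $(\lambda_k)_{k=1}^\infty\subset\operatorname{Int}_{\mathbb R^s}W_{\rm e}(\mathcal S)$ with $(\lambda_k)_{k=1}^\infty\in\mathcal D(\mathcal S)$, and write $\lambda_k=(\lambda_{k,1},\dots,\lambda_{k,s})$. Let $\alpha_0,\dots,\alpha_s\in\mathbb R$ with $(\alpha_1,\dots,\alpha_s)\ne(0,\dots,0)$, let $V=\alpha_0I+\sum_{j=1}^s\alpha_jS_j$ and $a=\inf\{t:t\in W(V)\}$. Then $$\sum_{k=1}^\infty\Bigl(\alpha_0-a+\sum_{j=1}^s\alpha_j\lambda_{k,j}\Bigr)=\infty.$$
   Context: $H$ is an infinite-dimensional complex separable Hilbert space. $W(V)=\{\langle Vx,x\rangle:\|x\|=1\}$. $W_{\rm e}(\mathcal S)\subset\mathbb R^s$ is the set of $\lambda$ with $\langle S_jx_k,x_k\rangle\to\lambda_j$ for all $j$ for some orthonormal sequence $(x_k)$. $\mathcal D(\mathcal S)$ is the set of sequences $(\langle S_1u_k,u_k\rangle,\dots,\langle S_su_k,u_k\rangle)_{k\ge1}$ over orthonormal bases $(u_k)$ of $H$. $\operatorname{Int}_{\mathbb R^s}$ is interior in $\mathbb R^s$. *)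

(* Defs.v *)
From Stdlib Require Import Reals.
Open Scope R_scope.

Definition C : Type := (R * R)%type.
Definition Cre (z : C) : R := fst z.
Definition Cim (z : C) : R := snd z.
Definition RtoC (r : R) : C := (r, 0).
Definition C0 : C := (0, 0).
Definition C1 : C := (1, 0).
Definition Cadd (z w : C) : C := (fst z + fst w, snd z + snd w).
Definition Cmul (z w : C) : C :=
  (fst z * fst w - snd z * snd w, fst z * snd w + snd z * fst w).
Definition Cconj (z : C) : C := (fst z, - snd z).

Record CHilbert := mkCHilbert {
  hs :> Type;
  hzero : hs;
  hadd : hs -> hs -> hs;
  hopp : hs -> hs;
  hscal : C -> hs -> hs;
  hinner : hs -> hs -> C;
  hadd_assoc : forall x y z, hadd x (hadd y z) = hadd (hadd x y) z;
  hadd_comm : forall x y, hadd x y = hadd y x;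
  hadd_zero : forall x, hadd x hzero = x;
  hadd_opp : forall x, hadd x (hopp x) = hzero;
  hscal_one : forall x, hscal C1 x = x;
  hscal_assoc : forall a b x, hscal a (hscal b x) = hscal (Cmul a b) x;
  hscal_addv : forall a x y, hscal a (hadd x y) = hadd (hscal a x) (hscal a y);
  hscal_adds : forall a b x, hscal (Cadd a b) x = hadd (hscal a x) (hscal b x);
  hinner_add_l : forall x y z, hinner (hadd x y) z = Cadd (hinner x z) (hinner y z);
  hinner_scal_l : forall a x y, hinner (hscal a x) y = Cmul a (hinner x y);
  hinner_conj : forall x y, hinner y x = Cconj (hinner x y);
  hinner_pos : forall x, 0 <= fst (hinner x x);
  hinner_def : forall x, hinner x x = C0 -> x = hzero;
  hcomplete : forall u : nat -> hs,
    (forall eps, eps > 0 -> exists N, forall m n, (m >= N)%nat -> (n >= N)%nat ->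
        sqrt (fst (hinner (hadd (u m) (hopp (u n))) (hadd (u m) (hopp (u n))))) < eps) ->
    exists l, forall eps, eps > 0 -> exists N, forall n, (n >= N)%nat ->
        sqrt (fst (hinner (hadd (u n) (hopp l)) (hadd (u n) (hopp l)))) < eps;
  hseparable : exists d : nat -> hs, forall x eps, eps > 0 -> exists n,
        sqrt (fst (hinner (hadd x (hopp (d n))) (hadd x (hopp (d n))))) < eps;
  hinfdim : exists e : nat -> hs, forall i j,
        hinner (e i) (e j) = if Nat.eqb i j then C1 else C0
}.

Arguments hzero {_}.
Arguments hadd {_}.
Arguments hopp {_}.
Arguments hscal {_}.
Arguments hinner {_}.

Section Ops.
Context {H : CHilbert}.

Definition hnorm (x : H) : R := sqrt (Cre (hinner x x)).

Definition is_bounded_op (T : H -> H) : Prop :=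
  (forall x y, T (hadd x y) = hadd (T x) (T y)) /\
  (forall a x, T (hscal a x) = hscal a (T x)) /\
  (exists M, forall x, hnorm (T x) <= M * hnorm x).

Definition is_selfadjoint (T : H -> H) : Prop :=
  is_bounded_op T /\ forall x y, hinner (T x) y = hinner x (T y).

(** Orthonormal sequences and orthonormal bases (indexed by nat; the
    paper's index k >= 1 corresponds to k-1 here). *)
Definition orthonormal_seq (x : nat -> H) : Prop :=
  forall i j, hinner (x i) (x j) = if Nat.eqb i j then C1 else C0.

Definition orthonormal_basis (u : nat -> H) : Prop :=
  orthonormal_seq u /\ forall y, (forall k, hinner y (u k) = C0) -> y = hzero.

Definition numrange (V : H -> H) (z : C) : Prop :=
  exists x, hnorm x = 1 /\ z = hinner (V x) x.

(** s-tuples are functions on nat of which only the indices j < s matter.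
    Joint essential numerical range W_e(S) in R^s. *)
Definition ess_numrange (s : nat) (S : nat -> H -> H) (lam : nat -> R) : Prop :=
  exists x : nat -> H, orthonormal_seq x /\
    forall j, (j < s)%nat ->
      Un_cv (fun k => Cre (hinner (S j (x k)) (x k))) (lam j) /\
      Un_cv (fun k => Cim (hinner (S j (x k)) (x k))) 0.

(** Interior in R^s (with the sup-norm, which induces the usual topology). *)
Definition interior_Rs (s : nat) (A : (nat -> R) -> Prop) (lam : nat -> R) : Prop :=
  exists eps, eps > 0 /\
    forall mu : nat -> R, (forall j, (j < s)%nat -> Rabs (mu j - lam j) < eps) -> A mu.

Definition diag_seqs (s : nat) (S : nat -> H -> H) (lam : nat -> nat -> R) : Prop :=
  exists u : nat -> H, orthonormal_basis u /\
    forall k j, (j < s)%nat -> RtoC (lam k j) = hinner (S j (u k)) (u k).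

Fixpoint hsum (n : nat) (f : nat -> H) : H :=
  match n with
  | O => hzero
  | Datatypes.S m => hadd (hsum m f) (f m)
  end.

Definition lincomb_op (s : nat) (alpha0 : R) (alpha : nat -> R) (S : nat -> H -> H)
  : H -> H :=
  fun x => hadd (hscal (RtoC alpha0) x) (hsum s (fun j => hscal (RtoC (alpha j)) (S j x))).

End Ops.

Definition is_glb (E : R -> Prop) (m : R) : Prop :=
  (forall t, E t -> m <= t) /\ (forall b, (forall t, E t -> b <= t) -> b <= m).

Fixpoint Rsum_lt (n : nat) (f : nat -> R) : R :=
  match n with
  | O => 0
  | Datatypes.S m => Rsum_lt m f + f m
  end.

(* Main.v *)
Require Import Defs.
From Stdlib Require Import Reals.
From Stdlib Require Import Lra Lia Classical.
Require Import Defs.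
Open Scope R_scope.

Arguments hadd_assoc {_}. Arguments hadd_comm {_}. Arguments hadd_zero {_}.
Arguments hadd_opp {_}. Arguments hscal_one {_}. Arguments hscal_assoc {_}.
Arguments hscal_addv {_}. Arguments hscal_adds {_}. Arguments hinner_add_l {_}.
Arguments hinner_scal_l {_}. Arguments hinner_conj {_}. Arguments hinner_pos {_}.
Arguments hinner_def {_}.

Section HS.
Context {H : CHilbert}.

Lemma hadd_zero_l (x : H) : hadd hzero x = x.
Proof. rewrite hadd_comm; apply hadd_zero. Qed.

Lemma hadd_idem_zero (y : H) : hadd y y = y -> y = hzero.
Proof.
  intro E.
  rewrite <- (hadd_opp y). rewrite <- E at 2.
  rewrite <- hadd_assoc, hadd_opp, hadd_zero. reflexivity.
Qed.

Lemma hscal_C0 (x : H) : hscal C0 x = hzero.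
Proof.
  apply hadd_idem_zero. rewrite <- hscal_adds. f_equal.
  unfold Cadd, C0; simpl; f_equal; ring.
Qed.

Lemma hopp_unique (x y : H) : hadd x y = hzero -> y = hopp x.
Proof.
  intro E.
  rewrite <- (hadd_zero y), <- (hadd_opp x), hadd_assoc, (hadd_comm y x), E.
  apply hadd_zero_l.
Qed.

Lemma hopp_scal (x : H) : hopp x = hscal (RtoC (-1)) x.
Proof.
  symmetry; apply hopp_unique.
  rewrite <- (hscal_one x) at 1. rewrite <- hscal_adds.
  replace (Cadd C1 (RtoC (-1))) with C0. apply hscal_C0.
  unfold Cadd, C0, C1, RtoC; simpl; f_equal; ring.
Qed.

Lemma hscal_zero_v (c : Defs.C) : hscal c (@hzero H) = hzero.
Proof.
  apply hadd_idem_zero. rewrite <- hscal_addv, hadd_zero. reflexivity.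
Qed.

Lemma hinner_zero_l (y : H) : hinner hzero y = C0.
Proof.
  rewrite <- (hscal_C0 y), hinner_scal_l.
  unfold Cmul, C0; simpl; f_equal; ring.
Qed.

Lemma Cconj_conj z : Cconj (Cconj z) = z.
Proof. destruct z; unfold Cconj; simpl; f_equal; ring. Qed.

Lemma hinner_add_r (x y z : H) : hinner x (hadd y z) = Cadd (hinner x y) (hinner x z).
Proof.
  rewrite hinner_conj, hinner_add_l, (hinner_conj x y), (hinner_conj x z).
  destruct (hinner y x), (hinner z x); unfold Cadd, Cconj; simpl; f_equal; ring.
Qed.

Lemma hinner_scal_r a (x y : H) : hinner x (hscal a y) = Cmul (Cconj a) (hinner x y).
Proof.
  rewrite hinner_conj, hinner_scal_l, (hinner_conj x y).
  destruct a, (hinner y x); unfold Cmul, Cconj; simpl; f_equal; ring.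
Qed.

Lemma hinner_zero_r (y : H) : hinner y hzero = C0.
Proof.
  rewrite hinner_conj, hinner_zero_l. unfold Cconj, C0; simpl; f_equal; ring.
Qed.

Lemma hinner_self_im (x : H) : snd (hinner x x) = 0.
Proof.
  pose proof (hinner_conj x x) as E. destruct (hinner x x) as [p q].
  unfold Cconj in E; simpl in *. injection E; intros; lra.
Qed.

End HS.

Lemma Rsum_ext n f g : (forall k, (k < n)%nat -> f k = g k) -> Rsum_lt n f = Rsum_lt n g.
Proof. induction n; simpl; intros E; auto. rewrite IHn, E; auto. Qed.
Lemma Rsum_plus n f g : Rsum_lt n (fun k => f k + g k) = Rsum_lt n f + Rsum_lt n g.
Proof. induction n; simpl; [ring|]. rewrite IHn; ring. Qed.
Lemma Rsum_scal n c f : Rsum_lt n (fun k => c * f k) = c * Rsum_lt n f.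
Proof. induction n; simpl; [ring|]. rewrite IHn; ring. Qed.
Lemma Rsum_le n f g : (forall k, (k < n)%nat -> f k <= g k) -> Rsum_lt n f <= Rsum_lt n g.
Proof. induction n; simpl; intros E; [lra|]. pose proof (E n (Nat.lt_succ_diag_r n)).
  assert (Rsum_lt n f <= Rsum_lt n g) by (apply IHn; intros; apply E; lia). lra. Qed.
Lemma Rsum_nonneg n f : (forall k, (k < n)%nat -> 0 <= f k) -> 0 <= Rsum_lt n f.
Proof. intro E. replace 0 with (Rsum_lt n (fun _ => 0)). apply Rsum_le; auto.
  clear E; induction n; simpl; auto. rewrite IHn; ring. Qed.
Lemma Rsum_mono n m f : (forall k, 0 <= f k) -> (n <= m)%nat -> Rsum_lt n f <= Rsum_lt m f.
Proof. intros P L. induction L; simpl; [lra|]. pose proof (P m); lra. Qed.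
Lemma Rsum_delta n l v f : (forall k, (k < n)%nat -> k <> l -> f k = 0) -> f l = v ->
  Rsum_lt n f = if Nat.ltb l n then v else 0.
Proof.
  induction n; simpl; intros Z V; auto.
  rewrite IHn; auto.
  destruct (Nat.eq_dec l n).
  - subst. rewrite Nat.ltb_irrefl. replace (Nat.ltb n (Datatypes.S n)) with true.
    ring. symmetry; apply Nat.ltb_lt; lia.
  - rewrite (Z n) by lia. destruct (Nat.ltb l n) eqn:E1.
    + apply Nat.ltb_lt in E1. replace (Nat.ltb l (Datatypes.S n)) with true. ring.
      symmetry; apply Nat.ltb_lt; lia.
    + apply Nat.ltb_ge in E1. replace (Nat.ltb l (Datatypes.S n)) with false. ring.
      symmetry; apply Nat.ltb_ge; lia.
Qed.

Definition Csum (n : nat) (g : nat -> Defs.C) : Defs.C :=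
  (Rsum_lt n (fun k => fst (g k)), Rsum_lt n (fun k => snd (g k))).

Definition nsq {H : CHilbert} (x : H) : R := fst (hinner x x).
Definition nsqC (z : Defs.C) : R := fst z * fst z + snd z * snd z.

Lemma nsqC_nonneg z : 0 <= nsqC z.
Proof. unfold nsqC; nra. Qed.

Section HS2.
Context {H : CHilbert}.

Lemma hinner_hsum_l n (f : nat -> H) z :
  hinner (hsum n f) z = Csum n (fun k => hinner (f k) z).
Proof.
  induction n; simpl.
  - rewrite hinner_zero_l. reflexivity.
  - rewrite hinner_add_l, IHn. reflexivity.
Qed.

Lemma hinner_hsum_r n (f : nat -> H) z :
  hinner z (hsum n f) = Csum n (fun k => hinner z (f k)).
Proof.
  induction n; simpl.
  - rewrite hinner_zero_r. reflexivity.
  - rewrite hinner_add_r, IHn. reflexivity.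
Qed.

Lemma hsum_ext n (f g : nat -> H) : (forall k, (k < n)%nat -> f k = g k) -> hsum n f = hsum n g.
Proof. induction n; simpl; intros E; auto. rewrite IHn, E; auto. Qed.

Lemma hadd_swap4 (a b c d : H) : hadd (hadd a b) (hadd c d) = hadd (hadd a c) (hadd b d).
Proof.
  rewrite <- !hadd_assoc. f_equal. rewrite !hadd_assoc. f_equal. apply hadd_comm.
Qed.

Lemma hsum_add n (f g : nat -> H) :
  hsum n (fun k => hadd (f k) (g k)) = hadd (hsum n f) (hsum n g).
Proof.
  induction n; simpl. { symmetry; apply hadd_zero. }
  rewrite IHn. apply hadd_swap4.
Qed.

Lemma hsum_scal n c (f : nat -> H) :
  hsum n (fun k => hscal c (f k)) = hscal c (hsum n f).
Proof.
  induction n; simpl. { symmetry; apply hscal_zero_v. }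
  rewrite IHn, hscal_addv; auto.
Qed.

Lemma nsq_nonneg (x : H) : 0 <= nsq x.
Proof. apply hinner_pos. Qed.

Lemma hinner_re_sym (x y : H) : fst (hinner y x) = fst (hinner x y).
Proof. rewrite hinner_conj. reflexivity. Qed.

Lemma nsq_add (u v : H) : nsq (hadd u v) = nsq u + nsq v + 2 * fst (hinner u v).
Proof.
  unfold nsq. rewrite hinner_add_l, !hinner_add_r. unfold Cadd; simpl.
  rewrite (hinner_re_sym u v). ring.
Qed.

Lemma hinner_opp_l (x y : H) : hinner (hopp x) y = Cmul (RtoC (-1)) (hinner x y).
Proof. rewrite hopp_scal, hinner_scal_l. reflexivity. Qed.
Lemma hinner_opp_r (x y : H) : hinner x (hopp y) = Cmul (RtoC (-1)) (hinner x y).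
Proof. rewrite hopp_scal, hinner_scal_r. destruct (hinner x y); unfold Cmul, Cconj, RtoC; simpl; f_equal; ring. Qed.

Lemma nsq_sub (u v : H) : nsq (hadd u (hopp v)) = nsq u + nsq v - 2 * fst (hinner u v).
Proof.
  rewrite nsq_add. unfold nsq. rewrite hinner_opp_r, hinner_opp_l, hinner_opp_r.
  destruct (hinner u v), (hinner v v); unfold Cmul, RtoC; simpl. ring.
Qed.

Lemma nsq_scal c (x : H) : nsq (hscal c x) = nsqC c * nsq x.
Proof.
  unfold nsq. rewrite hinner_scal_l, hinner_scal_r.
  pose proof (hinner_self_im x). destruct c, (hinner x x); unfold Cmul, Cconj, nsqC; simpl in *.
  subst. ring.
Qed.

Definition orthon (e : nat -> H) := forall i j, hinner (e i) (e j) = if Nat.eqb i j then C1 else C0.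

Lemma orthon_comb (e : nat -> H) (d : nat -> Defs.C) m l : orthon e ->
  hinner (hsum m (fun k => hscal (d k) (e k))) (e l) = if Nat.ltb l m then d l else C0.
Proof.
  intro O. rewrite hinner_hsum_l. unfold Csum.
  assert (T : forall k, hinner (hscal (d k) (e k)) (e l) = if Nat.eqb k l then d k else C0).
  { intro k. rewrite hinner_scal_l, O. destruct (Nat.eqb k l); destruct (d k);
    unfold Cmul, C1, C0; simpl; f_equal; ring. }
  assert (A1 : Rsum_lt m (fun k => fst (hinner (hscal (d k) (e k)) (e l))) = if Nat.ltb l m then fst (d l) else 0).
  { apply Rsum_delta.
    - intros k _ kl. rewrite T. apply Nat.eqb_neq in kl. rewrite kl; reflexivity.
    - rewrite T, Nat.eqb_refl; reflexivity. }
  assert (A2 : Rsum_lt m (fun k => snd (hinner (hscal (d k) (e k)) (e l))) = if Nat.ltb l m then snd (d l) else 0).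
  { apply Rsum_delta.
    - intros k _ kl. rewrite T. apply Nat.eqb_neq in kl. rewrite kl; reflexivity.
    - rewrite T, Nat.eqb_refl; reflexivity. }
  rewrite A1, A2. destruct (Nat.ltb l m); [destruct (d l)|]; reflexivity.
Qed.

Lemma inner_comb_r (e : nat -> H) (g : nat -> Defs.C) n z :
  hinner z (hsum n (fun l => hscal (g l) (e l))) = Csum n (fun l => Cmul (Cconj (g l)) (hinner z (e l))).
Proof. rewrite hinner_hsum_r. unfold Csum. f_equal; apply Rsum_ext; intros; rewrite hinner_scal_r; auto. Qed.

Lemma inner_comb_comb (e : nat -> H) d g M L : orthon e -> (L <= M)%nat ->
  fst (hinner (hsum M (fun k => hscal (d k) (e k))) (hsum L (fun l => hscal (g l) (e l))))
  = Rsum_lt L (fun l => fst (Cmul (Cconj (g l)) (d l))).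
Proof.
  intros O LM. rewrite inner_comb_r. unfold Csum; simpl. apply Rsum_ext; intros l Hl.
  rewrite orthon_comb by auto. replace (Nat.ltb l M) with true. auto.
  symmetry; apply Nat.ltb_lt; lia.
Qed.

Lemma conj_mul_self z : fst (Cmul (Cconj z) z) = nsqC z.
Proof. destruct z; unfold Cmul, Cconj, nsqC; simpl; ring. Qed.

Lemma nsq_comb (e : nat -> H) d M : orthon e ->
  nsq (hsum M (fun k => hscal (d k) (e k))) = Rsum_lt M (fun k => nsqC (d k)).
Proof.
  intro O. unfold nsq. rewrite inner_comb_comb by auto. apply Rsum_ext; intros; apply conj_mul_self.
Qed.

Definition Pj (e : nat -> H) (m : nat) (y : H) := hsum m (fun k => hscal (hinner y (e k)) (e k)).

Lemma bessel_id (e : nat -> H) m y : orthon e ->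
  nsq (hadd y (hopp (Pj e m y))) = nsq y - Rsum_lt m (fun k => nsqC (hinner y (e k))).
Proof.
  intro O. rewrite nsq_sub. unfold Pj. rewrite nsq_comb by auto.
  rewrite inner_comb_r. unfold Csum; cbn [fst].
  rewrite (Rsum_ext m (fun l => fst (Cmul (Cconj (hinner y (e l))) (hinner y (e l)))) (fun k => nsqC (hinner y (e k)))). ring.
  intros; apply conj_mul_self.
Qed.

Lemma bessel (e : nat -> H) m y : orthon e ->
  Rsum_lt m (fun k => nsqC (hinner y (e k))) <= nsq y.
Proof. intro O. pose proof (bessel_id e m y O). pose proof (nsq_nonneg (hadd y (hopp (Pj e m y)))). lra. Qed.

Lemma Pj_diff (e : nat -> H) L M y : orthon e -> (L <= M)%nat ->
  nsq (hadd (Pj e M y) (hopp (Pj e L y))) =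
  Rsum_lt M (fun k => nsqC (hinner y (e k))) - Rsum_lt L (fun k => nsqC (hinner y (e k))).
Proof.
  intros O LM. rewrite nsq_sub. unfold Pj. rewrite !nsq_comb by auto.
  rewrite inner_comb_comb by auto. rewrite (Rsum_ext L (fun l => fst (Cmul (Cconj (hinner y (e l))) (hinner y (e l)))) (fun k => nsqC (hinner y (e k)))). ring.
  intros; apply conj_mul_self.
Qed.

End HS2.

Lemma mono_le (T : nat -> R) : (forall n, T n <= T (Datatypes.S n)) -> forall n m, (n <= m)%nat -> T n <= T m.
Proof. intros I n m L; induction L; [lra|]. pose proof (I m); lra. Qed.

Lemma mono_cauchy (T : nat -> R) B : (forall n, T n <= T (Datatypes.S n)) -> (forall n, T n <= B) ->
  forall eps, eps > 0 -> exists N, forall M, (N <= M)%nat -> T M - T N < eps.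
Proof.
  intros I Bd eps Heps.
  destruct (completeness (fun x => exists n, x = T n)) as [l [Ub Lub]].
  { exists B. intros x [n ->]. apply Bd. }
  { exists (T 0%nat). eauto. }
  destruct (classic (exists N, T N > l - eps)) as [[N HN]|No].
  - exists N. intros M _. assert (T M <= l) by (apply Ub; eauto). lra.
  - exfalso. assert (l <= l - eps). { apply Lub. intros x [n ->].
      apply Rnot_gt_le. intro G; apply No; eauto. } lra.
Qed.

Lemma sqrt_lt_inv a b : 0 <= a -> sqrt a < sqrt b -> a < b.
Proof.
  intros Ha L. destruct (Rlt_or_le a b); auto.
  assert (sqrt b <= sqrt a) by (apply sqrt_le_1_alt; auto). lra.
Qed.

Section HS3.
Context {H : CHilbert}.

Lemma hopp_opp (x : H) : hopp (hopp x) = x.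
Proof. symmetry. apply hopp_unique. rewrite hadd_comm. apply hadd_opp. Qed.

Lemma nsq_sub_sym (u v : H) : nsq (hadd u (hopp v)) = nsq (hadd v (hopp u)).
Proof. rewrite !nsq_sub, hinner_re_sym. ring. Qed.

Lemma nsqC_le_nsq (e : nat -> H) k v : orthon e -> nsqC (hinner v (e k)) <= nsq v.
Proof.
  intro O. pose proof (bessel e (Datatypes.S k) v O). simpl in H0.
  assert (0 <= Rsum_lt k (fun k0 => nsqC (hinner v (e k0)))) by (apply Rsum_nonneg; intros; apply nsqC_nonneg).
  lra.
Qed.

Lemma split3 (y z m : H) : hadd y (hopp z) = hadd (hadd y (hopp m)) (hadd m (hopp z)).
Proof.
  rewrite <- hadd_assoc. f_equal. rewrite hadd_assoc, (hadd_comm (hopp m) m), hadd_opp. 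
  symmetry; apply hadd_zero_l.
Qed.

Lemma nsqC_zero z : (forall eps, eps > 0 -> nsqC z < eps) -> z = C0.
Proof.
  intro A. assert (nsqC z <= 0). { apply Rnot_gt_le. intro G. specialize (A _ G). lra. }
  destruct z as [p q]. unfold nsqC, C0 in *; simpl in *. f_equal; nra.
Qed.

Lemma parseval (e : nat -> H) y : orthon e ->
  (forall w, (forall k, hinner w (e k) = C0) -> w = hzero) ->
  forall eps, eps > 0 -> exists N, forall M, (N <= M)%nat -> nsq (hadd y (hopp (Pj e M y))) < eps.
Proof.
  intros O Max.
  set (T := fun M => Rsum_lt M (fun k => nsqC (hinner y (e k)))).
  assert (TI : forall n, T n <= T (Datatypes.S n)).
  { intro n; unfold T; simpl. pose proof (nsqC_nonneg (hinner y (e n))). lra. }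
  assert (TB : forall n, T n <= nsq y) by (intro; apply bessel; auto).
  destruct (hcomplete H (fun M => Pj e M y)) as [z Hz].
  { intros eps Heps.
    destruct (mono_cauchy T _ TI TB (eps * eps)) as [N HN]. nra.
    exists N. intros m n Hm Hn.
    assert (Gen : forall m n, (N <= n <= m)%nat -> sqrt (nsq (hadd (Pj e m y) (hopp (Pj e n y)))) < eps).
    { intros m' n' [H1 H2]. rewrite Pj_diff by auto.
      rewrite <- (sqrt_Rsqr eps) by lra. apply sqrt_lt_1_alt. split.
      - pose proof (mono_le T TI _ _ H2). unfold T in H0. lra.
      - pose proof (HN m' (Nat.le_trans _ _ _ H1 H2)). pose proof (mono_le T TI _ _ H1).
        unfold T, Rsqr in *. lra. }
    change (sqrt (nsq (hadd (Pj e m y) (hopp (Pj e n y)))) < eps).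
    destruct (Nat.le_ge_cases n m).
    - apply Gen; lia.
    - rewrite (nsq_sub_sym (Pj e m y)). apply Gen; lia. }
  assert (Small : forall eps, eps > 0 -> exists N, forall M, (N <= M)%nat -> nsq (hadd (Pj e M y) (hopp z)) < eps).
  { intros eps Heps. destruct (Hz (sqrt eps)) as [N HN]. apply sqrt_lt_R0; lra.
    exists N. intros M HM. apply sqrt_lt_inv. apply nsq_nonneg. apply HN. lia. }
  assert (Yz : y = z).
  { assert (W : hadd y (hopp z) = hzero).
    { apply Max. intro k. apply nsqC_zero. intros eps Heps.
      destruct (Small eps Heps) as [N HN].
      set (M := Nat.max N (Datatypes.S k)).
      rewrite (split3 y z (Pj e M y)), hinner_add_l.
      rewrite hinner_add_l, hinner_opp_l. unfold Pj. rewrite orthon_comb by auto.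
      replace (Nat.ltb k M) with true by (symmetry; apply Nat.ltb_lt; lia).
      replace (Cadd (hinner y (e k)) (Cmul (RtoC (-1)) (hinner y (e k)))) with C0
        by (destruct (hinner y (e k)); unfold Cadd, Cmul, RtoC, C0; simpl; f_equal; ring).
      eapply Rle_lt_trans. 2: apply (HN M); lia.
      unfold Pj. eapply Rle_trans. 2: apply (nsqC_le_nsq e k); auto.
      destruct (hinner (hadd (hsum M (fun k0 : nat => hscal (hinner y (e k0)) (e k0))) (hopp z)) (e k)).
      unfold Cadd, C0, nsqC; simpl. lra. }
    pose proof (hopp_unique _ _ W). rewrite <- (hopp_opp z), H0, hopp_opp. reflexivity. }
  intros eps Heps. destruct (Small eps Heps) as [N HN]. exists N. intros M HM.
  rewrite nsq_sub_sym. rewrite Yz at 2. apply HN; auto.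
Qed.

End HS3.

Lemma discr A B C0' : 0 <= A -> 0 <= C0' -> (forall t, 0 <= A * t * t + B * t + C0') -> B * B <= 4 * A * C0'.
Proof.
  intros HA HC P. destruct (Req_dec A 0) as [A0|A0].
  - subst. destruct (Req_dec B 0) as [B0|B0]. subst; lra.
    specialize (P (- (C0' + 1) / B)).
    replace (0 * (- (C0' + 1) / B) * (- (C0' + 1) / B) + B * (- (C0' + 1) / B) + C0') with (-1) in P by (field; auto). lra.
  - specialize (P (- B / (2 * A))).
    assert (0 < A) by lra.
    replace (A * (- B / (2 * A)) * (- B / (2 * A)) + B * (- B / (2 * A)) + C0') with (C0' - B * B / (4 * A)) in P by (field; lra).
    assert (B * B / (4 * A) <= C0') by lra.
    apply Rmult_le_compat_r with (r := 4 * A) in H0; [|lra].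
    replace (B * B / (4 * A) * (4 * A)) with (B * B) in H0 by (field; lra). lra.
Qed.

Section Form.
Context {H : CHilbert}.
Context (V : H -> H) (a : R).
Context (Vadd : forall x y, V (hadd x y) = hadd (V x) (V y)).
Context (Vscal : forall c x, V (hscal c x) = hscal c (V x)).
Context (Qnn : forall x, 0 <= fst (hinner (V x) x) - a * nsq x).

Definition Q (x : H) := fst (hinner (V x) x) - a * nsq x.
Definition Dq (x y : H) := fst (hinner (V x) y) + fst (hinner (V y) x) - 2 * a * fst (hinner x y).

Lemma Q_nn x : 0 <= Q x.
Proof. apply Qnn. Qed.

Lemma Q_add x y : Q (hadd x y) = Q x + Q y + Dq x y.
Proof.
  unfold Q, Dq. rewrite Vadd, nsq_add, hinner_add_l, !hinner_add_r. unfold Cadd; simpl. ring.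
Qed.

Lemma Q_scal c x : Q (hscal c x) = nsqC c * Q x.
Proof.
  unfold Q. rewrite Vscal, nsq_scal, hinner_scal_l, hinner_scal_r.
  destruct c, (hinner (V x) x); unfold Cmul, Cconj, nsqC; simpl. ring.
Qed.

Lemma Dq_scal t x y : Dq (hscal (RtoC t) x) y = t * Dq x y.
Proof.
  unfold Dq. rewrite Vscal, !hinner_scal_l, hinner_scal_r.
  destruct (hinner (V x) y), (hinner (V y) x), (hinner x y); unfold Cmul, Cconj, RtoC; simpl. ring.
Qed.

Lemma Q_zero : Q hzero = 0.
Proof. unfold Q, nsq. rewrite !hinner_zero_r. unfold C0; simpl. ring. Qed.

Lemma Dq_bound x y : Dq x y <= 2 * sqrt (Q x) * sqrt (Q y).
Proof.
  assert (Dsq : Dq x y * Dq x y <= 4 * Q x * Q y).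
  { apply discr; try apply Q_nn. intro t.
    pose proof (Q_nn (hadd (hscal (RtoC t) x) y)).
    rewrite Q_add, Q_scal, Dq_scal in H0. unfold nsqC, RtoC in H0; simpl in H0. nra. }
  pose proof (sqrt_sqrt (Q x) (Q_nn x)). pose proof (sqrt_sqrt (Q y) (Q_nn y)).
  pose proof (sqrt_pos (Q x)). pose proof (sqrt_pos (Q y)).
  destruct (Rle_or_lt (Dq x y) 0). nra.
  rewrite <- H0, <- H1 in Dsq.
  set (p := sqrt (Q x)) in *. set (q := sqrt (Q y)) in *. set (D := Dq x y) in *.
  assert (0 <= p * q) by (apply Rmult_le_pos; auto).
  destruct (Rle_or_lt D (2 * p * q)); auto.
  assert (D * D > (2 * p * q) * (2 * p * q)) by (apply Rmult_gt_0_lt_compat; nra). nra.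
Qed.

Lemma Q_add_le x y : Q (hadd x y) <= 2 * Q x + 2 * Q y.
Proof.
  rewrite Q_add. pose proof (Dq_bound x y).
  pose proof (sqrt_sqrt (Q x) (Q_nn x)). pose proof (sqrt_sqrt (Q y) (Q_nn y)).
  pose proof (Rle_0_sqr (sqrt (Q x) - sqrt (Q y))). unfold Rsqr in *.
  set (p := sqrt (Q x)) in *. set (q := sqrt (Q y)) in *. nra.
Qed.

Definition rho x := sqrt (Q x).

Lemma rho_add x y : rho (hadd x y) <= rho x + rho y.
Proof.
  unfold rho. rewrite <- (sqrt_Rsqr (sqrt (Q x) + sqrt (Q y))).
  2: pose proof (sqrt_pos (Q x)); pose proof (sqrt_pos (Q y)); lra.
  apply sqrt_le_1_alt. rewrite Q_add. pose proof (Dq_bound x y).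
  pose proof (sqrt_sqrt (Q x) (Q_nn x)). pose proof (sqrt_sqrt (Q y) (Q_nn y)).
  unfold Rsqr. nra.
Qed.

Lemma rho_scal c x : rho (hscal c x) = sqrt (nsqC c) * rho x.
Proof. unfold rho. rewrite Q_scal, sqrt_mult; auto. apply nsqC_nonneg. apply Q_nn. Qed.

Lemma rho_comb (e : nat -> H) d m :
  rho (hsum m (fun k => hscal (d k) (e k))) <= Rsum_lt m (fun k => sqrt (nsqC (d k)) * rho (e k)).
Proof.
  induction m; simpl.
  - unfold rho. rewrite Q_zero, sqrt_0. lra.
  - eapply Rle_trans. apply rho_add. rewrite rho_scal. lra.
Qed.

Lemma Q_rho x : Q x = rho x * rho x.
Proof. unfold rho. rewrite sqrt_sqrt; auto. apply Q_nn. Qed.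

End Form.

Lemma re_le {H : CHilbert} (u x : H) : fst (hinner u x) <= (nsq u + nsq x) / 2.
Proof. pose proof (nsq_sub u x). pose proof (nsq_nonneg (hadd u (hopp x))). lra. Qed.
Lemma re_ge {H : CHilbert} (u x : H) : - ((nsq u + nsq x) / 2) <= fst (hinner u x).
Proof. pose proof (nsq_add u x). pose proof (nsq_nonneg (hadd u x)). lra. Qed.

Section Spec.
Context {H : CHilbert} (s : nat) (S : nat -> H -> H)
  (HS : forall j, (j < s)%nat -> is_selfadjoint (S j))
  (alpha0 : R) (alpha : nat -> R) (a : R)
  (Ha : is_glb (fun t => numrange (lincomb_op s alpha0 alpha S) (RtoC t)) a).

Let V := lincomb_op s alpha0 alpha S.

Lemma Cmul_comm z w : Cmul z w = Cmul w z.
Proof. destruct z, w; unfold Cmul; simpl; f_equal; ring. Qed.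

Lemma hscal_comm c d (x : H) : hscal c (hscal d x) = hscal d (hscal c x).
Proof. rewrite !hscal_assoc, Cmul_comm; auto. Qed.

Lemma V_add x y : V (hadd x y) = hadd (V x) (V y).
Proof.
  unfold V, lincomb_op. rewrite hscal_addv.
  rewrite (hsum_ext s _ (fun j => hadd (hscal (RtoC (alpha j)) (S j x)) (hscal (RtoC (alpha j)) (S j y)))).
  - rewrite hsum_add. apply hadd_swap4.
  - intros j Hj. destruct (HS j Hj) as [[A _] _]. rewrite A, hscal_addv; auto.
Qed.

Lemma V_scal c x : V (hscal c x) = hscal c (V x).
Proof.
  unfold V, lincomb_op. rewrite hscal_addv, hscal_comm. f_equal.
  rewrite <- hsum_scal. apply hsum_ext. intros j Hj.
  destruct (HS j Hj) as [[_ [A _]] _]. rewrite A, hscal_comm; auto.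
Qed.

Lemma V_inner_fst x y : fst (hinner (V x) y) =
  alpha0 * fst (hinner x y) + Rsum_lt s (fun j => alpha j * fst (hinner (S j x) y)).
Proof.
  unfold V, lincomb_op. rewrite hinner_add_l, hinner_scal_l, hinner_hsum_l. unfold Csum, Cadd; simpl.
  f_equal. unfold RtoC; simpl; ring. apply Rsum_ext; intros. rewrite hinner_scal_l. unfold Cmul, RtoC; simpl; ring.
Qed.

Lemma V_inner_snd x y : snd (hinner (V x) y) =
  alpha0 * snd (hinner x y) + Rsum_lt s (fun j => alpha j * snd (hinner (S j x) y)).
Proof.
  unfold V, lincomb_op. rewrite hinner_add_l, hinner_scal_l, hinner_hsum_l. unfold Csum, Cadd; simpl.
  f_equal. unfold RtoC; simpl; ring. apply Rsum_ext; intros. rewrite hinner_scal_l. unfold Cmul, RtoC; simpl; ring.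
Qed.

Lemma S_im j x : (j < s)%nat -> snd (hinner (S j x) x) = 0.
Proof.
  intro Hj. destruct (HS j Hj) as [_ A]. pose proof (A x x). rewrite (hinner_conj (S j x) x) in H0.
  destruct (hinner (S j x) x); unfold Cconj in H0; simpl in *. injection H0; lra.
Qed.

Lemma V_im x : snd (hinner (V x) x) = 0.
Proof.
  rewrite V_inner_snd, hinner_self_im. rewrite (Rsum_ext s _ (fun _ => 0)).
  - clear; induction s; simpl; lra.
  - intros j Hj. rewrite S_im; auto; ring.
Qed.

Lemma V_Qnn x : 0 <= fst (hinner (V x) x) - a * nsq x.
Proof.
  destruct (Req_dec (nsq x) 0) as [Z|Z].
  - assert (x = hzero). { apply hinner_def. pose proof (hinner_self_im x). unfold nsq in Z.
      destruct (hinner x x); unfold C0; simpl in *; subst; auto. }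
    subst. rewrite hinner_zero_r, Z. unfold C0; simpl. lra.
  - pose proof (nsq_nonneg x). assert (P : 0 < nsq x) by lra.
    set (r := sqrt (nsq x)). assert (Rp : 0 < r) by (apply sqrt_lt_R0; auto).
    assert (rr : r * r = nsq x) by (apply sqrt_sqrt; lra).
    set (y := hscal (RtoC (1 / r)) x).
    assert (Ny : nsq y = 1). { unfold y. rewrite nsq_scal. unfold nsqC, RtoC; simpl. rewrite <- rr. field; lra. }
    assert (Vy : fst (hinner (V y) y) = (1 / r) * (1 / r) * fst (hinner (V x) x)).
    { unfold y. rewrite V_scal, hinner_scal_l, hinner_scal_r. pose proof (V_im x).
      destruct (hinner (V x) x); unfold Cmul, Cconj, RtoC; simpl in *. ring. }
    destruct Ha as [Lb _].
    assert (a <= fst (hinner (V y) y)).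
    { apply Lb. exists y. split.
      - unfold hnorm, Cre. fold (nsq y). rewrite Ny. apply sqrt_1.
      - change (lincomb_op s alpha0 alpha S) with V. pose proof (V_im y). unfold RtoC. destruct (hinner (V y) y) as [p q]. simpl in *. subst q. reflexivity. }
    rewrite Vy in H1. rewrite <- rr.
    assert (a * (r * r) <= fst (hinner (V x) x)).
    { apply Rmult_le_compat_r with (r := r * r) in H1; [|nra].
      replace (1 / r * (1 / r) * fst (hinner (V x) x) * (r * r)) with (fst (hinner (V x) x)) in H1 by (field; lra).
      lra. }
    lra.
Qed.

Lemma S_bound j : (j < s)%nat -> exists K, forall x, alpha j * fst (hinner (S j x) x) <= K * nsq x.
Proof.
  intro Hj. destruct (HS j Hj) as [[_ [_ [M HM]]] _].
  exists (Rabs (alpha j) * (M * M + 1) / 2). intro x.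
  assert (N : nsq (S j x) <= M * M * nsq x).
  { specialize (HM x). unfold hnorm, Cre in HM. fold (nsq (S j x)) (nsq x) in HM.
    pose proof (sqrt_pos (nsq (S j x))). pose proof (sqrt_sqrt _ (nsq_nonneg (S j x))).
    pose proof (sqrt_sqrt _ (nsq_nonneg x)). pose proof (sqrt_pos (nsq x)).
    rewrite <- H1, <- H2. nra. }
  pose proof (re_le (S j x) x). pose proof (re_ge (S j x) x).
  pose proof (nsq_nonneg x). pose proof (nsq_nonneg (S j x)).
  assert (alpha j * fst (hinner (S j x) x) <= Rabs (alpha j) * ((nsq (S j x) + nsq x) / 2)).
  { destruct (Rcase_abs (alpha j)); [rewrite Rabs_left by auto|rewrite Rabs_right by auto]; nra. }
  pose proof (Rabs_pos (alpha j)). nra.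
Qed.

Lemma sum_bound n : (n <= s)%nat -> exists K, forall x,
  Rsum_lt n (fun j => alpha j * fst (hinner (S j x) x)) <= K * nsq x.
Proof.
  induction n; intro Hn.
  - exists 0. intros; simpl. pose proof (nsq_nonneg x); lra.
  - destruct IHn as [K1 HK1]. lia. destruct (S_bound n) as [K2 HK2]. lia.
    exists (K1 + K2). intro x; simpl. specialize (HK1 x); specialize (HK2 x). lra.
Qed.

Lemma Q_upper : exists K, forall x, Q V a x <= K * nsq x.
Proof.
  destruct (sum_bound s (le_n s)) as [K HK].
  exists (Rabs alpha0 + Rabs a + K). intro x. unfold Q. rewrite V_inner_fst.
  specialize (HK x). fold (nsq x). pose proof (nsq_nonneg x).
  pose proof (Rle_abs alpha0). pose proof (Rle_abs (-a)) as Ra. rewrite Rabs_Ropp in Ra. nra.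
Qed.

End Spec.

Lemma tends0 (f : nat -> R) B : (forall n, 0 <= f n) -> (forall m, Rsum_lt m f <= B) ->
  forall eps, eps > 0 -> exists N, forall n, (N <= n)%nat -> f n < eps.
Proof.
  intros P Bd eps He.
  assert (I : forall n, Rsum_lt n f <= Rsum_lt (Datatypes.S n) f) by (intro n; simpl; pose proof (P n); lra).
  destruct (mono_cauchy (fun m => Rsum_lt m f) B I Bd eps He) as [N HN].
  exists N. intros n Hn. pose proof (HN (Datatypes.S n) ltac:(lia)). simpl in H.
  pose proof (mono_le (fun m => Rsum_lt m f) I N n Hn). simpl in H0. lra.
Qed.

Lemma finsum_small (F : nat -> nat -> R) : (forall k, forall eps, eps > 0 -> exists N, forall n, (N <= n)%nat -> F n k < eps) ->
  forall N0 eps, eps > 0 -> exists N, forall n, (N <= n)%nat -> Rsum_lt N0 (F n) < eps.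
Proof.
  intros A N0. induction N0; intros eps He.
  - exists 0%nat. intros; simpl; lra.
  - destruct (IHN0 (eps / 2)) as [N1 H1]. lra. destruct (A N0 (eps / 2)) as [N2 H2]. lra.
    exists (Nat.max N1 N2). intros n Hn. simpl. specialize (H1 n ltac:(lia)). specialize (H2 n ltac:(lia)). lra.
Qed.

Lemma Rsum_tail (g : nat -> R) N d :
  Rsum_lt (N + d) (fun k => if Nat.ltb k N then 0 else g k) = Rsum_lt (N + d) g - Rsum_lt N g.
Proof.
  induction d.
  - rewrite Nat.add_0_r. rewrite (Rsum_ext N _ (fun _ => 0)).
    + clear. induction N; simpl; lra.
    + intros k Hk. apply Nat.ltb_lt in Hk. rewrite Hk; auto.
  - rewrite Nat.add_succ_r. simpl. rewrite IHd. replace (Nat.ltb (N + d) N) with false.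
    ring. symmetry; apply Nat.ltb_ge; lia.
Qed.

Lemma Rsum_cv s (g : nat -> nat -> R) (l : nat -> R) (alpha : nat -> R) :
  (forall j, (j < s)%nat -> Un_cv (fun n => g n j) (l j)) ->
  Un_cv (fun n => Rsum_lt s (fun j => alpha j * g n j)) (Rsum_lt s (fun j => alpha j * l j)).
Proof.
  induction s; intros A; simpl.
  - intros e He. exists 0%nat. intros. unfold Rdist. rewrite Rminus_eq_0, Rabs_R0. lra.
  - apply CV_plus. apply IHs. intros; apply A; lia.
    apply CV_mult. intros e He. exists 0%nat. intros. unfold Rdist. rewrite Rminus_eq_0, Rabs_R0. lra.
    apply A; lia.
Qed.

Lemma Rsum_bump s (f g : nat -> R) j0 d : (j0 < s)%nat ->
  (forall j, j <> j0 -> g j = f j) -> g j0 = f j0 + d ->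
  Rsum_lt s g = Rsum_lt s f + d.
Proof.
  induction s; intros Hj E1 E2. lia. simpl.
  destruct (Nat.eq_dec j0 s).
  - subst. rewrite (Rsum_ext s g f). lra. intros; apply E1; lia.
  - rewrite IHs; auto. rewrite E1; auto. lra. lia.
Qed.

Lemma amgm a b eta : 0 < eta -> a * b <= (eta * (a * a) + b * b / eta) / 2.
Proof.
  intro He. pose proof (Rle_0_sqr (eta * a - b)) as H. unfold Rsqr in H.
  apply Rmult_le_reg_r with (r := 2 * eta). lra.
  replace ((eta * (a * a) + b * b / eta) / 2 * (2 * eta)) with (eta * eta * (a * a) + b * b) by (field; lra).
  nra.
Qed.

Section Core.
Context {H : CHilbert}.
Context (V : H -> H) (a : R).
Context (Vadd : forall x y, V (hadd x y) = hadd (V x) (V y)).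
Context (Vscal : forall c x, V (hscal c x) = hscal c (V x)).
Context (Qnn : forall x, 0 <= fst (hinner (V x) x) - a * nsq x).
Context (K : R) (HK : forall x, Q V a x <= K * nsq x).
Context (u : nat -> H) (Ou : orthon u) (Mu : forall w, (forall k, hinner w (u k) = C0) -> w = hzero).
Context (Tail : forall eps, eps > 0 -> exists N, forall M, (N <= M)%nat ->
   Rsum_lt M (fun k => Q V a (u k)) - Rsum_lt N (fun k => Q V a (u k)) < eps).
Context (x : nat -> H) (Ox : orthon x) (c : R) (Hc : c > 0) (Cx : Un_cv (fun n => Q V a (x n)) c).

Let QQ := Q V a.

Lemma QK y : QQ y <= Rabs K * nsq y.
Proof. pose proof (HK y). pose proof (Rle_abs K). pose proof (nsq_nonneg y). unfold QQ. nra. Qed.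

Lemma coeff_small : forall N0 eps, eps > 0 -> exists N, forall n, (N <= n)%nat ->
  Rsum_lt N0 (fun k => nsqC (hinner (x n) (u k))) < eps.
Proof.
  apply (finsum_small (fun n k => nsqC (hinner (x n) (u k)))).
  intros k eps He.
  apply (tends0 (fun n => nsqC (hinner (x n) (u k))) (nsq (u k))); auto.
  - intros; apply nsqC_nonneg.
  - intro m. eapply Rle_trans. 2: apply (bessel x m (u k) Ox).
    apply Rsum_le. intros n _. rewrite (hinner_conj (x n)). unfold nsqC, Cconj; simpl. lra.
Qed.

Lemma core_false : False.
Proof.
  set (K' := Rabs K). assert (K0 : 0 <= K') by apply Rabs_pos.
  set (eta := Rmin 1 (c / 64)).
  assert (Eta0 : 0 < eta) by (unfold eta; apply Rmin_pos; lra).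
  assert (Eta1 : eta <= 1) by apply Rmin_l.
  assert (Eta2 : eta <= c / 64) by apply Rmin_r.
  set (d1 := c / (16 * (K' + 1))).
  assert (D1 : 0 < d1) by (unfold d1; apply Rdiv_lt_0_compat; lra).
  assert (D1' : 2 * K' * d1 <= c / 8).
  { unfold d1. apply Rmult_le_reg_r with (r := 16 * (K' + 1)). lra.
    replace (2 * K' * (c / (16 * (K' + 1))) * (16 * (K' + 1))) with (2 * K' * c) by (field; lra). nra. }
  destruct (Tail (eta * eta)) as [N HN]. nra.
  destruct (coeff_small N d1 D1) as [N1 HN1].
  destruct (Cx (c / 2)) as [N2 HN2]. lra.
  set (n := Nat.max N1 N2).
  specialize (HN1 n ltac:(lia)). specialize (HN2 n ltac:(lia)).
  unfold Rdist in HN2. apply Rabs_def2 in HN2. destruct HN2 as [_ HN2].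
  set (y := x n) in *.
  assert (Ny : nsq y = 1). { unfold nsq, y. rewrite Ox, Nat.eqb_refl. reflexivity. }
  set (p := Pj u N y). set (r := hadd y (hopp p)).
  assert (Yd : y = hadd p r).
  { unfold r. rewrite hadd_assoc, (hadd_comm p y), <- hadd_assoc, hadd_opp, hadd_zero. reflexivity. }
  assert (Qp : QQ p <= K' * d1).
  { eapply Rle_trans. apply QK. unfold p, Pj. rewrite nsq_comb by auto.
    apply Rmult_le_compat_l; auto. lra. }
  assert (Nr : nsq r <= 1).
  { unfold r, p. rewrite bessel_id by auto. rewrite Ny.
    pose proof (Rsum_nonneg N (fun k => nsqC (hinner y (u k))) (fun k _ => nsqC_nonneg _)). lra. }
  assert (Rlow : forall k, (k < N)%nat -> hinner r (u k) = C0).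
  { intros k Hk. unfold r. rewrite hinner_add_l, hinner_opp_l. unfold p, Pj. rewrite orthon_comb by auto.
    replace (Nat.ltb k N) with true by (symmetry; apply Nat.ltb_lt; auto).
    destruct (hinner y (u k)); unfold Cadd, Cmul, RtoC, C0; simpl; f_equal; ring. }
  set (d2 := c / (32 * (K' + 1))).
  assert (D2 : 0 < d2) by (unfold d2; apply Rdiv_lt_0_compat; lra).
  assert (D2' : 4 * K' * d2 <= c / 8).
  { unfold d2. apply Rmult_le_reg_r with (r := 32 * (K' + 1)). lra.
    replace (4 * K' * (c / (32 * (K' + 1))) * (32 * (K' + 1))) with (4 * K' * c) by (field; lra). nra. }
  destruct (parseval u r Ou Mu d2 D2) as [M0 HM0].
  set (M := (N + M0)%nat).
  specialize (HM0 M ltac:(lia)).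
  set (t := Pj u M r).
  assert (Rd : r = hadd t (hadd r (hopp t))).
  { rewrite hadd_assoc, (hadd_comm t r), <- hadd_assoc, hadd_opp, hadd_zero. reflexivity. }
  assert (Qrt : QQ (hadd r (hopp t)) <= K' * d2).
  { eapply Rle_trans. apply QK. apply Rmult_le_compat_l; auto. unfold t; lra. }
  assert (Rt : rho V a t <= eta).
  { unfold t, Pj. eapply Rle_trans. apply rho_comb; auto.
    eapply Rle_trans.
    apply (Rsum_le M _ (fun k => (eta * nsqC (hinner r (u k)) + (if Nat.ltb k N then 0 else QQ (u k)) / eta) / 2)).
    - intros k _. destruct (Nat.ltb k N) eqn:E.
      + apply Nat.ltb_lt in E. rewrite Rlow by auto.
        replace (nsqC C0) with 0 by (unfold nsqC, C0; simpl; ring). rewrite sqrt_0. unfold Rdiv. 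
        pose proof (nsqC_nonneg C0). lra.
      + pose proof (amgm (sqrt (nsqC (hinner r (u k)))) (rho V a (u k)) eta Eta0).
        rewrite sqrt_sqrt in H0 by apply nsqC_nonneg. rewrite <- Q_rho in H0 by auto. exact H0.
    - assert (Sum1 : Rsum_lt M (fun k => nsqC (hinner r (u k))) <= 1).
      { eapply Rle_trans. apply bessel; auto. auto. }
      assert (Sum2 : Rsum_lt M (fun k => if Nat.ltb k N then 0 else QQ (u k)) < eta * eta).
      { unfold M. rewrite Rsum_tail. apply HN. lia. }
      assert (E : Rsum_lt M (fun k => (eta * nsqC (hinner r (u k)) + (if Nat.ltb k N then 0 else QQ (u k)) / eta) / 2)
        = (eta * Rsum_lt M (fun k => nsqC (hinner r (u k))) + Rsum_lt M (fun k => if Nat.ltb k N then 0 else QQ (u k)) / eta) / 2).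
      { rewrite (Rsum_ext M _ (fun k => (eta / 2) * nsqC (hinner r (u k)) + (/ (2 * eta)) * (if Nat.ltb k N then 0 else QQ (u k)))) by (intros; field; lra).
        rewrite Rsum_plus, !Rsum_scal. field. lra. }
      rewrite E.
      assert (Rsum_lt M (fun k => if Nat.ltb k N then 0 else QQ (u k)) / eta < eta).
      { apply Rmult_lt_reg_r with (r := eta); auto. unfold Rdiv.
        rewrite Rmult_assoc, Rinv_l by lra. lra. }
      nra. }
  assert (Qt : QQ t <= eta * eta).
  { unfold QQ. rewrite Q_rho by auto. pose proof (sqrt_pos (Q V a t)). unfold rho in *. nra. }
  assert (Qr : QQ r <= 2 * QQ t + 2 * (K' * d2)).
  { rewrite Rd at 1. unfold QQ. pose proof (Q_add_le V a Vadd Vscal Qnn t (hadd r (hopp t))). unfold QQ in Qrt. lra. }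
  assert (Qy : QQ y <= 2 * QQ p + 2 * QQ r).
  { rewrite Yd at 1. apply Q_add_le; auto. }
  assert (eta * eta <= c / 64) by nra.
  unfold QQ, y in *. lra.
Qed.

End Core.

Lemma sum_f_Rsum g n : sum_f_R0 g n = Rsum_lt (Datatypes.S n) g.
Proof. induction n; simpl; [ring|]. rewrite IHn. simpl. ring. Qed.

Lemma Un_cv_ext f g l : (forall n, f n = g n) -> Un_cv f l -> Un_cv g l.
Proof. intros E C e He. destruct (C e He) as [N HN]. exists N. intros. rewrite <- E. auto. Qed.

Theorem corollary4p7 (H : CHilbert) (s : nat) (S : nat -> H -> H)
  (HS : forall j, (j < s)%nat -> is_selfadjoint (S j))
  (lam : nat -> nat -> R)
  (Hint : forall k, interior_Rs s (ess_numrange s S) (lam k))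
  (HD : diag_seqs s S lam)
  (alpha0 : R) (alpha : nat -> R)
  (Halpha : exists j, (j < s)%nat /\ alpha j <> 0)
  (a : R)
  (Ha : is_glb (fun t => numrange (lincomb_op s alpha0 alpha S) (RtoC t)) a) :
  cv_infty (fun n => sum_f_R0
    (fun k => alpha0 - a + Rsum_lt s (fun j => alpha j * lam k j)) n).
Proof.
  set (V := lincomb_op s alpha0 alpha S).
  set (g := fun k => alpha0 - a + Rsum_lt s (fun j => alpha j * lam k j)).
  destruct HD as [u [[Ou Mu] Hu]].
  assert (Vadd := V_add s S HS alpha0 alpha).
  assert (Vscal := V_scal s S HS alpha0 alpha).
  assert (Qnn := V_Qnn s S HS alpha0 alpha a Ha).
  destruct (Q_upper s S HS alpha0 alpha a) as [K HK].
  assert (Gq : forall k, g k = Q V a (u k)).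
  { intro k. unfold g, Q, V. rewrite V_inner_fst. unfold nsq. rewrite Ou, Nat.eqb_refl. unfold C1; simpl.
    rewrite (Rsum_ext s (fun j => alpha j * fst (hinner (S j (u k)) (u k))) (fun j => alpha j * lam k j)). ring.
    intros j Hj. rewrite <- Hu by auto. reflexivity. }
  assert (Gnn : forall k, 0 <= g k). { intro k. rewrite Gq. apply Qnn. }
  (* a point of W_e with larger functional value *)
  destruct Halpha as [j0 [Hj0 Aj0]].
  destruct (Hint 0%nat) as [eps [Heps We]].
  set (d := if Rlt_dec 0 (alpha j0) then eps / 2 else - (eps / 2)).
  set (mu := fun j => if Nat.eqb j j0 then lam 0%nat j + d else lam 0%nat j).
  assert (Mu_in : ess_numrange s S mu).
  { apply We. intros j Hj. unfold mu. destruct (Nat.eqb j j0).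
    - replace (lam 0%nat j + d - lam 0%nat j) with d by ring. unfold d.
      destruct (Rlt_dec 0 (alpha j0)).
      + rewrite Rabs_pos_eq; lra.
      + rewrite Rabs_left; lra.
    - rewrite Rminus_diag, Rabs_R0. lra. }
  destruct Mu_in as [x [Ox Cvx]].
  set (c := alpha0 - a + Rsum_lt s (fun j => alpha j * mu j)).
  assert (Cpos : c > 0).
  { assert (E : Rsum_lt s (fun j => alpha j * mu j) = Rsum_lt s (fun j => alpha j * lam 0%nat j) + alpha j0 * d).
    { apply (Rsum_bump s _ _ j0 (alpha j0 * d)); auto.
      - intros j Hj. unfold mu. apply Nat.eqb_neq in Hj. rewrite Hj. reflexivity.
      - unfold mu. rewrite Nat.eqb_refl. ring. }
    unfold c. rewrite E. pose proof (Gnn 0%nat). unfold g in H0.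
    assert (alpha j0 * d > 0).
    { unfold d. destruct (Rlt_dec 0 (alpha j0)).
      - apply Rmult_lt_0_compat; lra.
      - assert (alpha j0 < 0) by lra. nra. }
    lra. }
  assert (Cx : Un_cv (fun n => Q V a (x n)) c).
  { apply (Un_cv_ext (fun n => (alpha0 - a) + Rsum_lt s (fun j => alpha j * fst (hinner (S j (x n)) (x n))))).
    - intro n. unfold Q, V. rewrite V_inner_fst. unfold nsq. rewrite Ox, Nat.eqb_refl. unfold C1; simpl. ring.
    - unfold c. apply CV_plus.
      + intros e He. exists 0%nat. intros. unfold Rdist. rewrite Rminus_diag, Rabs_R0. lra.
      + apply (Rsum_cv s (fun n j => fst (hinner (S j (x n)) (x n))) mu alpha).
        intros j Hj. apply (proj1 (Cvx j Hj)). }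
  apply NNPP. intro NC. unfold cv_infty in NC.
  apply not_all_ex_not in NC. destruct NC as [B HB].
  assert (Bd : forall m, Rsum_lt m g <= B).
  { intro m. apply NNPP. intro Hm.
    apply HB. exists m. intros n Hn. rewrite sum_f_Rsum.
    fold g. apply Rnot_le_lt in Hm.
    pose proof (Rsum_mono m (Datatypes.S n) g Gnn ltac:(lia)). lra. }
  apply (core_false V a Vadd Vscal Qnn K HK u Ou Mu) with (x := x) (c := c); auto.
  intros e He.
  assert (I : forall n, Rsum_lt n (fun k => Q V a (u k)) <= Rsum_lt (Datatypes.S n) (fun k => Q V a (u k))).
  { intro n; simpl. rewrite <- Gq. pose proof (Gnn n). lra. }
  assert (Bd' : forall n, Rsum_lt n (fun k => Q V a (u k)) <= B).
  { intro n. rewrite <- (Rsum_ext n g). apply Bd. intros; apply Gq. }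
  destruct (mono_cauchy _ B I Bd' e He) as [N HN]. exists N. auto.
Qed.
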